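(* For each integer $k\ge0$ there is a polynomial $E_k(d)\in\mathbb{Q}[d]$ of degree $k$ such that $\mathbb{E}[\mathcal{X}_d^k]=E_k(d)$ for all integers $d\ge k-1$, $d\ge0$. These polynomials satisfy the formal power series identity (in $z$, for every $d$) \[ \sum_{k\ge0}\frac{E_k(d)}{k!}z^k=\Big(\frac{e^z-1}{z}\Big)^{d+2}e^{-z}. \] In particular, setting $E'_k(d)=\sum_{i=0}^k\binom{k}{i}E_i(d)\big(-\tfrac d2\big)^{k-i}$, one has for all integers $a,b\ge0$ and $k\ge0$ \[ E'_k(a+b+2)=\sum_{i+j=k}\binom{k}{i}E'_i(a)E'_j(b). \]
   Context: $\mathcal{X}_d$ is the random variable equal to the number of descents of a uniformly random permutation of $\{1,\dots,d+1\}$ (equivalently, the random variable with $\Pr(\mathcal{X}_d=k)=a_k/\sum_i a_i$ where $a_k=\dim A^k$ of the Chow ring of the Boolean matroid on $d+1$ elements, these being Eulerian numbers). *)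

(* Defs.v *)
From mathcomp Require Import all_boot all_order all_algebra all_fingroup.
Set Implicit Arguments. Unset Strict Implicit. Unset Printing Implicit Defensive.
Import GRing.Theory Num.Theory.
Local Open Scope ring_scope.

(* Number of descents of a permutation s of {0,...,d} (i.e. of d+1 elements):
   positions i (0 <= i < d) with s(i) > s(i+1). *)
Definition des (d : nat) (s : 'S_d.+1) : nat :=
  #|[set i : 'I_d | (s (lift ord0 i) < s (widen_ord (leqnSn d) i))%N]|.

Definition moment (d k : nat) : rat :=
  (\sum_(s : 'S_d.+1) ((des s) ^ k)%N%:R) / (d.+1)`!%:R.

Definition fps := nat -> rat.
Definition fps_mul (a b : fps) : fps :=
  fun n => \sum_(i < n.+1) a i * b (n - i)%N.
Definition fps_exp (a : fps) (m : nat) : fps := iter m (fps_mul a) (fun n => (n == 0)%:R).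
(* (e^z - 1)/z = sum_n z^n/(n+1)! *)
Definition fps_expm1_div_z : fps := fun n => (n.+1`!%:R)^-1.
Definition fps_exp_neg : fps := fun n => (-1) ^+ n / (n`!%:R).

Definition Eprime (E : nat -> {poly rat}) (k : nat) : {poly rat} :=
  \sum_(i < k.+1) ('C(k, i))%:R *: (E i * (- (2%:R)^-1 *: 'X) ^+ (k - i)).

(* Main.v *)
Require Import Defs.
From mathcomp Require Import all_boot all_order all_algebra all_fingroup.
From mathcomp Require Import zify ring lra.
Import GRing.Theory Num.Theory.
Local Open Scope ring_scope.
Definition cdes (f : nat -> nat) (m : nat) : nat := \sum_(i < m) ((f i.+1 < f i)%N : nat).

Lemma des_cdes d (s : 'S_d.+1) : des s = cdes (fun j => val (s (inord j))) d.
Proof.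
rewrite /des /cdes -sum1_card big_mkcond /=.
apply: eq_bigr => i _; rewrite inE.
have -> : lift ord0 i = inord i.+1 :> 'I_d.+1 by apply: val_inj; rewrite /= inordK // ltnS.
have -> : widen_ord (leqnSn d) i = inord i :> 'I_d.+1.
  by apply: val_inj; rewrite /= inordK // ltnW // ltnS.
by case: ifP.
Qed.

Lemma sum_shift (F : nat -> nat) a b :
  (\sum_(i < a + b) F i = \sum_(i < a) F i + \sum_(i < b) F (a + i))%N.
Proof.
elim: b => [|b IH]; first by rewrite addn0 big_ord0 addn0.
by rewrite addnS !big_ord_recr /= IH addnA.
Qed.

Lemma sum_shift' (F : nat -> nat) a b m : m = (a + b)%N ->
  (\sum_(i < m) F i = \sum_(i < a) F i + \sum_(i < b) F (a + i))%N.
Proof. by move=> ->; apply: sum_shift. Qed.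

Lemma cdes_ins n p (g h : nat -> nat) N :
  (p <= n.+1)%N -> g p = N -> (forall i, i <= n -> h i < N)%N ->
  (forall i, i <= n -> g (bump p i) = h i)%N ->
  (cdes g n.+1 + ((0 < p <= n) && (h p < h p.-1)) = cdes h n + (p <= n))%N.
Proof.
move=> Hp HgN HhN Hg; rewrite /cdes.
case: p Hp HgN Hg => [|q] Hp HgN Hg.
  rewrite big_ord_recl /= HgN.
  have -> : g 1%N = h 0%N by rewrite -Hg.
  rewrite HhN // addn0 add1n addn1; congr _.+1.
  apply: eq_bigr => i _ /=; have := ltn_ord i => ?.
  have -> : g (bump 0 i).+1 = h i.+1 by rewrite -Hg //; lia.
  have -> : g (bump 0 i) = h i by apply: Hg; lia.
  by [].
case: (ltnP q n) => Hqn; last first.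
  have Eq : q = n by lia.
  subst q; rewrite big_ord_recr /= HgN.
  have -> : g n = h n by rewrite -Hg // /bump; congr g; lia.
  rewrite ltnNge ltnW ?HhN // addn0 /= !addn0.
  apply: eq_bigr => i _; have := ltn_ord i => ?.
  have -> : g i = h i by rewrite -Hg /bump; [congr g; lia | lia].
  have -> : g i.+1 = h i.+1 by rewrite -Hg /bump; [congr g; lia | lia].
  by [].
rewrite (@sum_shift' (fun i => (g i.+1 < g i : nat)) q.+2 (n - q.+1)); last by lia.
rewrite !big_ord_recr /=.
rewrite (@sum_shift' (fun i => (h i.+1 < h i : nat)) q.+1 (n - q.+1)); last by lia.
rewrite big_ord_recr /=.
have E1 : forall i, (i <= q)%N -> g i = h i.
  by move=> i Hi; rewrite -Hg /bump; [congr g; lia | lia].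
rewrite HgN (E1 q) // ltnNge ltnW ?HhN //.
have -> : g q.+2 = h q.+1 by rewrite -Hg /bump; [congr g; lia | lia].
rewrite HhN ?ltn0Sn ?Hqn /=; last by lia.
have -> : (\sum_(i < q) (g i.+1 < g i : nat) = \sum_(i < q) (h i.+1 < h i : nat))%N.
  by apply: eq_bigr => i _; have := ltn_ord i => ?; rewrite !E1 //; lia.
have -> : (\sum_(i < n - q.+1) (g (q.+2 + i).+1 < g (q.+2 + i) : nat)
   = \sum_(i < n - q.+1) (h (q.+1 + i).+1 < h (q.+1 + i) : nat))%N.
  apply: eq_bigr => i _; have := ltn_ord i => ?.
  have -> : (g (q.+2 + i).+1 = h (q.+1 + i).+1)%N by rewrite -Hg /bump; [congr g; lia | lia].
  have -> : (g (q.+2 + i) = h (q.+1 + i))%N by rewrite -Hg /bump; [congr g; lia | lia].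
  by [].
rewrite addn0 -!addnA; congr (_ + _).
match goal with |- (_ = ?c + (_ + 1))%N => set C := c end.
match goal with |- (1 + (?b + _) = _)%N => set B := b end.
transitivity (C + (B + 1))%N; first lia.
by [].
Qed.

Lemma sum_if (b : nat -> bool) (x y : rat) n :
  \sum_(i < n) (if b i then x else y) =
  (\sum_(i < n) (b i : nat))%N%:R * x + (n%:R - (\sum_(i < n) (b i : nat))%N%:R) * y.
Proof.
elim: n => [|n IH]; first by rewrite !big_ord0 subrr !mul0r addr0.
rewrite !big_ord_recr /= IH natrD -addn1 natrD.
by case: (b n) => /=; ring.
Qed.

Lemma sum_ins (F : nat -> rat) n (h : nat -> nat) (D' : nat -> nat) :
  (forall p, p <= n.+1 -> D' p + ((0 < p <= n) && (h p < h p.-1)) = cdes h n + (p <= n))%N ->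
  \sum_(p < n.+2) F (D' p) =
  ((cdes h n)%:R + 1) * F (cdes h n) + (n.+1%:R - (cdes h n)%:R) * F (cdes h n).+1.
Proof.
move=> HD; set D := cdes h n.
rewrite big_ord_recl big_ord_recr /=.
have -> : D' 0%N = D.+1 by have := HD 0%N isT; rewrite /= addn0 addn1.
have -> : D' n.+1 = D by have := HD n.+1 (leqnn _); rewrite ltnn andbF /= !addn0.
have -> : \sum_(i < n) F (D' (bump 0 (widen_ord (leqnSn n) i)))
   = \sum_(i < n) (if (h i.+1 < h i)%N then F D else F D.+1).
  apply: eq_bigr => i _ /=; have := ltn_ord i => Hi.
  have := HD i.+1; rewrite /bump /= add1n ltnS (ltnW Hi) Hi /= => /(_ isT).
  by case: (h i.+1 < h i)%N => /= E; congr F; lia.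
rewrite (sum_if (fun i => h i.+1 < h i)%N) -/(cdes h n) -/D.
rewrite -[n.+1]addn1 natrD; ring.
Qed.

Lemma perm_rec n (F : nat -> rat) :
  \sum_(s : 'S_n.+2) F (des s) =
  \sum_(t : 'S_n.+1) (((des t)%:R + 1) * F (des t) + (n.+1%:R - (des t)%:R) * F (des t).+1).
Proof.
pose hh : 'I_n.+2 * 'S_n.+1 -> 'S_n.+2 := fun pt => lift_perm pt.1 ord_max pt.2.
have hinj : injective hh.
  move=> [p t] [p' t'] /= E.
  have Ep : p = p'.
    have := congr1 (fun s : 'S_n.+2 => s p) E; rewrite /hh /= lift_perm_id.
    by rewrite -{1}(lift_perm_id p' ord_max t') => /perm_inj.
  subst p'; congr (_, _); apply/permP => k.
  have := congr1 (fun s : 'S_n.+2 => s (lift p k)) E; rewrite /hh /= !lift_perm_lift.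
  exact: lift_inj.
have hbij : bijective hh.
  by apply: (inj_card_bij hinj); rewrite card_prod !card_Sn card_ord factS.
rewrite (reindex hh) /=; last by apply: onW_bij.
rewrite -(pair_big xpredT xpredT (fun p t => F (des (hh (p, t))))) /=.
rewrite exchange_big /=; apply: eq_bigr => t _.
rewrite (eq_bigr (fun p : 'I_n.+2 => F (des (lift_perm (inord p) ord_max t)))); last first.
  by move=> p _; rewrite /hh /= inord_val.
rewrite (des_cdes _ t).
apply: (sum_ins F n (fun j => val (t (inord j))) (fun p => des (lift_perm (inord p) ord_max t))).
move=> p Hp; rewrite des_cdes.
apply: (@cdes_ins n p _ _ n.+1) => //.
- by rewrite lift_perm_id.
- by move=> i _; apply: ltn_ord.
move=> i Hi.
have -> : inord (bump p i) = lift (inord p : 'I_n.+2) (inord i : 'I_n.+1).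
  by apply: val_inj; rewrite /= !inordK //; try lia; rewrite /bump; lia.
rewrite (@lift_perm_lift n.+1) /= /bump leqNgt ltn_ord /=; lia.
Qed.

Definition rec (x : nat -> rat) (m k : nat) : rat :=
  x k.+1 + x k + \sum_(i < k.+1) 'C(k, i)%:R * (m%:R * x i - x i.+1).

Definition Pm d k : rat := \sum_(s : 'S_d.+1) ((des s) ^ k)%N%:R.

Lemma Pm_rec d k :
  Pm d.+1 k = Pm d k.+1 + Pm d k + \sum_(i < k.+1) 'C(k, i)%:R * (d.+1%:R * Pm d i - Pm d i.+1).
Proof.
rewrite /Pm (perm_rec d (fun x => (x ^ k)%N%:R)).
have E : forall t : 'S_d.+1,
  ((des t)%:R + 1) * ((des t) ^ k)%N%:R + (d.+1%:R - (des t)%:R) * (((des t).+1) ^ k)%N%:R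
  = ((des t) ^ k.+1)%N%:R + ((des t) ^ k)%N%:R +
    \sum_(i < k.+1) 'C(k, i)%:R * (d.+1%:R * ((des t) ^ i)%N%:R - ((des t) ^ i.+1)%N%:R) :> rat.
  move=> t; set D := ((des t)%:R : rat).
  rewrite !natrX -/D -[(des t).+1%:R]natr1 -/D exprD1n mulr_sumr.
  under [X in _ = _ + X]eq_bigr do rewrite !natrX -/D.
  have -> : \sum_(i < k.+1) (d.+1%:R - D) * (D ^+ i *+ 'C(k, i))
     = \sum_(i < k.+1) 'C(k, i)%:R * (d.+1%:R * D ^+ i - D ^+ i.+1).
    by apply: eq_bigr => i _; rewrite exprS -mulr_natr; ring.
  by rewrite exprS; ring.
rewrite (eq_bigr _ (fun t _ => E t)).
rewrite !big_split /=; congr (_ + _).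
rewrite exchange_big /=; apply: eq_bigr => i _.
rewrite -mulr_sumr; congr (_ * _).
by rewrite sumrB mulr_sumr.
Qed.

Lemma moment_rec d k : (d.+2)%:R * moment d.+1 k = rec (moment d) d.+1 k.
Proof.
have M : forall d k, moment d k = Pm d k / (d.+1)`!%:R by [].
rewrite /rec !M Pm_rec.
under [X in _ = _ + X]eq_bigr => i _ do rewrite -/(Pm d i) -/(Pm d i.+1).
have c0 : (d.+1)`!%:R != 0 :> rat by rewrite pnatr_eq0 -lt0n fact_gt0.
rewrite factS natrM invfM.
have -> : \sum_(i < k.+1) 'C(k, i)%:R * (d.+1%:R * (Pm d i / (d.+1)`!%:R) - Pm d i.+1 / (d.+1)`!%:R)
   = (\sum_(i < k.+1) 'C(k, i)%:R * (d.+1%:R * Pm d i - Pm d i.+1)) / (d.+1)`!%:R.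
  by rewrite mulr_suml; apply: eq_bigr => i _; ring.
have d0 : d.+2%:R != 0 :> rat by rewrite pnatr_eq0.
set S := \sum_(i < _) _; set c := (d.+1)`!%:R in c0 *; set e := d.+2%:R in d0 *.
by rewrite mulrCA [e * _]mulrA mulfV // mul1r !mulrDl.
Qed.

Definition tp K (a : nat -> rat) : {poly rat} := \poly_(i < K) a i.
Definition eqK K (p q : {poly rat}) := forall i, (i < K)%N -> p`_i = q`_i.
Definition idl K (r : {poly rat}) := forall i, (i < K)%N -> r`_i = 0.

Lemma coef_tp K a i : (tp K a)`_i = if (i < K)%N then a i else 0.
Proof. by rewrite coef_poly. Qed.

Lemma eqK_mul K p p' q q' : eqK K p p' -> eqK K q q' -> eqK K (p * q) (p' * q').
Proof.
move=> Hp Hq i Hi; rewrite !coefM; apply: eq_bigr => j _.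
have Hj := ltn_ord j.
by rewrite Hp ?Hq //; lia.
Qed.

Lemma eqK_exp K p p' n : eqK K p p' -> eqK K (p ^+ n) (p' ^+ n).
Proof.
move=> Hp; elim: n => [|n IH]; first by move=> i _; rewrite !expr0.
by rewrite !exprS; apply: eqK_mul.
Qed.

Lemma eqK_le K K' p q : (K' <= K)%N -> eqK K p q -> eqK K' p q.
Proof. by move=> HK H i Hi; apply: H; lia. Qed.

Lemma eqK_trans K p q r : eqK K p q -> eqK K q r -> eqK K p r.
Proof. by move=> H1 H2 i Hi; rewrite H1 ?H2. Qed.

Arguments eqK_mul {K p p' q q'}.
Arguments eqK_exp {K p p'} n.

Lemma eqK_refl K p : eqK K p p.
Proof. by []. Qed.

Lemma eqK_sym K p q : eqK K p q -> eqK K q p.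
Proof. by move=> H i Hi; rewrite H. Qed.

Arguments eqK_trans {K p q r}.
Arguments eqK_sym {K p q}.

Lemma idl_mul K s r : idl K r -> idl K (s * r).
Proof.
move=> Hr i Hi; rewrite coefM big1 // => j _.
have Hj := ltn_ord j.
by rewrite Hr ?mulr0 //; lia.
Qed.

Lemma idl_add K r s : idl K r -> idl K s -> idl K (r + s).
Proof. by move=> Hr Hs i Hi; rewrite coefD Hr ?Hs ?addr0. Qed.

Lemma idl_opp K r : idl K r -> idl K (- r).
Proof. by move=> Hr i Hi; rewrite coefN Hr ?oppr0. Qed.

Arguments idl_mul {K} s {r}.
Arguments idl_add {K r s}.
Arguments idl_opp {K r}.

Lemma idl_le K K' r : (K' <= K)%N -> idl K r -> idl K' r.
Proof. by move=> HK H i Hi; apply: H; lia. Qed.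

Lemma idl_eqK K p q : idl K (p - q) -> eqK K p q.
Proof. by move=> H i Hi; apply/eqP; rewrite -subr_eq0 -coefB H. Qed.

Lemma fps_mul_tp K a b j : (j < K)%N -> fps_mul a b j = (tp K a * tp K b)`_j.
Proof.
move=> Hj; rewrite coefM /fps_mul; apply: eq_bigr => i _.
have Hi := ltn_ord i.
by rewrite !coef_tp ifT ?ifT //; lia.
Qed.

Lemma fps_exp_tp K a m j : (j < K)%N -> fps_exp a m j = ((tp K a) ^+ m)`_j.
Proof.
elim: m j => [|m IH] j Hj; first by rewrite expr0 coef1.
rewrite /fps_exp iterS -/(fps_exp a m) exprS coefM /fps_mul.
apply: eq_bigr => i _; have Hi := ltn_ord i.
by rewrite coef_tp ifT ?IH //; lia.
Qed.

Definition ex (c : rat) : nat -> rat := fun i => c ^+ i / i`!%:R.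
Definition G K := tp K fps_expm1_div_z.
Definition Ex K c := tp K (ex c).

Lemma fact_neq0 n : n`!%:R != 0 :> rat.
Proof. by rewrite pnatr_eq0 -lt0n fact_gt0. Qed.

Lemma coefXM' (p : {poly rat}) i : ('X * p)`_i = if i == 0%N then 0 else p`_i.-1.
Proof. by rewrite mulrC coefMX. Qed.

Lemma idl_XG K : idl K ('X * G K - (Ex K 1 - 1)).
Proof.
move=> i Hi; rewrite coefB coefXM' coefB coef1 /G /Ex !coef_tp Hi.
case: i Hi => [|i] Hi /=; first by rewrite /ex expr0 fact0 divr1 !subrr.
rewrite ifT; last by lia.
by rewrite /fps_expm1_div_z /ex expr1n subr0 mul1r subrr.
Qed.

Lemma idl_XGd K : idl K ('X * (G K)^`() - (Ex K 1 - G K)).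
Proof.
move=> i Hi; rewrite coefB coefXM' coefB coef_deriv /G /Ex !coef_tp Hi.
case: i Hi => [|i] Hi /=.
  rewrite /ex /fps_expm1_div_z expr0 fact0 divr1 invr1; lra.
rewrite Hi /ex /fps_expm1_div_z expr1n mul1r.
rewrite -mulr_natr (factS i.+1) natrM invfM.
have h1 := fact_neq0 i.+1.
have h2 : i.+2%:R != 0 :> rat by rewrite pnatr_eq0.
set f := (i.+1)`!%:R in h1 *; set e := i.+2%:R in h2 *.
rewrite -mulr_natr.
have -> : i.+1%:R = e - 1 by rewrite /e -(natr1 i.+1) addrK.
rewrite invr1 mul1r invfM.
have eu := mulfV h2.
transitivity ((e * e^-1 - 1) * f^-1); first ring.
by rewrite eu subrr mul0r.
Qed.

Lemma idl_Emd K : idl K.-1 ((Ex K (-1))^`() + Ex K (-1)).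
Proof.
move=> i Hi; rewrite coefD coef_deriv /Ex !coef_tp ifT; last by lia.
rewrite ifT; last by lia.
rewrite /ex -mulr_natr factS natrM invfM exprS.
have h1 := fact_neq0 i.
have h2 : i.+1%:R != 0 :> rat by rewrite pnatr_eq0.
set f := i`!%:R in h1 *; set e := i.+1%:R in h2 *.
rewrite -mulr_natr -/e invr1 mul1r invfM.
have eu := mulfV h2.
transitivity ((e * e^-1 - 1) * (-1) * (-1) ^+ i / f); first ring.
by rewrite eu subrr !mul0r.
Qed.

Lemma binr i j : (j <= i)%N -> 'C(i, j)%:R = i`!%:R / (j`!%:R * (i - j)`!%:R) :> rat.
Proof.
move=> Hj; rewrite -(bin_fact Hj) natrM natrM mulfK //.
by rewrite mulf_neq0 // fact_neq0.
Qed.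

Lemma eqK_Ex K a b : eqK K (Ex K a * Ex K b) (Ex K (a + b)).
Proof.
move=> i Hi; rewrite coefM /Ex coef_tp Hi /ex addrC exprDn mulr_suml.
apply: eq_bigr => j _; have Hj := ltn_ord j.
rewrite !coef_tp ifT ?ifT; try lia.
rewrite -[_ *+ 'C(i, j)]mulr_natr binr; last by lia.
have h1 := fact_neq0 j; have h2 := fact_neq0 (i - j); have h3 := fact_neq0 i.
rewrite invfM.
set x := j`!%:R in h1 *; set y := (i - j)`!%:R in h2 *; set z := i`!%:R in h3 *.
transitivity (a ^+ j * b ^+ (i - j) * x^-1 * y^-1 * (z * z^-1)).
  by rewrite mulfV // mulr1; ring.
ring.
Qed.

Lemma eqK_Ex0 K : eqK K (Ex K 0) 1.
Proof.
move=> i Hi; rewrite /Ex coef_tp Hi coef1 /ex expr0n.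
by case: i Hi => [|i] _ /=; rewrite ?mul0r // fact0 divr1.
Qed.

Lemma eqK_Exn K a n : eqK K (Ex K a ^+ n) (Ex K (n%:R * a)).
Proof.
elim: n => [|n IH]; first by rewrite expr0 mul0r; apply: eqK_sym; apply: eqK_Ex0.
rewrite exprS; apply: eqK_trans (eqK_mul (eqK_refl _ _) IH) _.
apply: eqK_trans (eqK_Ex _ _ _) _.
by move=> i _; rewrite -natr1 mulrDl mul1r addrC.
Qed.

Lemma coef_mulEx K c (p : {poly rat}) k : (k < K)%N ->
  k`!%:R * (p * Ex K c)`_k = \sum_(i < k.+1) 'C(k, i)%:R * (i`!%:R * p`_i) * c ^+ (k - i).
Proof.
move=> Hk; rewrite coefM mulr_sumr; apply: eq_bigr => i _.
have Hi := ltn_ord i.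
rewrite /Ex coef_tp ifT; last by lia.
rewrite /ex binr; last by lia.
have h1 := fact_neq0 i; have h2 := fact_neq0 (k - i); have h3 := fact_neq0 k.
rewrite invfM.
set x := i`!%:R in h1 *; set y := (k - i)`!%:R in h2 *; set z := k`!%:R in h3 *.
transitivity (z * p`_i * c ^+ (k - i) * y^-1 * (x * x^-1)); first by rewrite mulfV // mulr1; ring.
ring.
Qed.


Lemma cont_rec K d k : (k.+2 < K)%N ->
  (d.+2)%:R * (k`!%:R * ((G K) ^+ d.+3 * Ex K (-1))`_k) =
  rec (fun i => i`!%:R * ((G K) ^+ d.+2 * Ex K (-1))`_i) d.+1 k.
Proof.
move=> HK.
set g := G K; set em := Ex K (-1); set e1 := Ex K 1; set Q := g ^+ d.
have E2 : g ^+ d.+2 = Q * g * g by rewrite !exprSr.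
have E3 : g ^+ d.+3 = Q * g * g * g by rewrite !exprSr.
set Phi := g ^+ d.+2 * em.
have E1 : g ^+ d.+1 = Q * g by rewrite !exprSr.
have dPhi : Phi^`() = (d.+2)%:R * (g^`() * (Q * g) * em) + Q * g * g * em^`().
  by rewrite /Phi derivM deriv_exp /= -mulr_natl E1 E2; ring.
set L := (1 - e1) * Phi^`() + (1 + (d.+1)%:R * e1) * Phi.
set R := (d.+2)%:R * (g * Phi).
have HI : idl K.-1 (L - R).
  have -> : L - R = (Phi^`() + Phi) * ('X * g - (e1 - 1))
      - ((d.+2)%:R * (Q * g * g * em)) * ('X * g^`() - (e1 - g))
      - ('X * (Q * g * g * g)) * (em^`() + em).
    by rewrite /L /R dPhi /Phi E2; ring.
  apply: idl_add; first apply: idl_add.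
  - by apply: idl_mul; apply: (idl_le K); [lia | apply: idl_XG].
  - by apply: idl_opp; apply: idl_mul; apply: (idl_le K); [lia | apply: idl_XGd].
  - by apply: idl_opp; apply: idl_mul; apply: idl_Emd.
have Hk : (k < K.-1)%N by lia.
have HLR : L`_k = R`_k := idl_eqK _ _ _ HI k Hk.
have gPhi : g * Phi = g ^+ d.+3 * em by rewrite /Phi mulrA -exprS.
have HR : k`!%:R * R`_k = (d.+2)%:R * (k`!%:R * (g ^+ d.+3 * em)`_k).
  by rewrite /R gPhi -polyC_natr coefCM; ring.
rewrite -HR -HLR.
set mu := fun i => i`!%:R * Phi`_i.
have A1 : k`!%:R * Phi^`()`_k = mu k.+1.
  by rewrite /mu coef_deriv -mulr_natr factS natrM; ring.
have A2 : k`!%:R * (Phi^`() * e1)`_k = \sum_(i < k.+1) 'C(k, i)%:R * mu i.+1.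
  rewrite coef_mulEx; last by lia.
  apply: eq_bigr => i _; rewrite expr1n mulr1 /mu coef_deriv -mulr_natr factS natrM; ring.
have A3 : k`!%:R * (Phi * e1)`_k = \sum_(i < k.+1) 'C(k, i)%:R * mu i.
  rewrite coef_mulEx; last by lia.
  by apply: eq_bigr => i _; rewrite expr1n mulr1.
have -> : L = Phi^`() - Phi^`() * e1 + Phi + (Phi * e1) *+ d.+1.
  by rewrite /L -mulr_natl; ring.
rewrite !coefD coefN coefMn -[(Phi * e1)`_k *+ _]mulr_natr !mulrDr mulrN A1 A2 /rec -/(mu k) mulrA A3.
have -> : \sum_(i < k.+1) 'C(k, i)%:R * (d.+1%:R * mu i - mu i.+1)
   = d.+1%:R * (\sum_(i < k.+1) 'C(k, i)%:R * mu i) - \sum_(i < k.+1) 'C(k, i)%:R * mu i.+1.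
  by rewrite mulr_sumr -sumrB; apply: eq_bigr => i _; ring.
ring.
Qed.

Lemma ffact_prod n j : (n ^_ j)%:R = \prod_(i < j) (n%:R - i%:R) :> rat.
Proof.
elim: j => [|j IH]; first by by rewrite big_ord0.
rewrite ffactnSr natrM big_ord_recr /= IH.
case: (leqP j n) => Hj; first by rewrite natrB.
have : (n ^_ j)%:R = 0 :> rat by rewrite ffact_small.
by rewrite IH => ->; rewrite !mul0r.
Qed.

Definition Bp j : {poly rat} := (j`!%:R)^-1 *: \prod_(i < j) ('X - (i%:R - 2)%:P).

Lemma Bp_eval j n : (Bp j).[n%:R] = 'C(n.+2, j)%:R.
Proof.
rewrite /Bp hornerZ horner_prod.
have -> : \prod_(i < j) ('X - (i%:R - 2)%:P).[n%:R] = (n.+2 ^_ j)%N%:R :> rat.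
  rewrite ffact_prod; apply: eq_bigr => i _; rewrite hornerXsubC.
  by rewrite -[n.+2]addn2 natrD; ring.
by rewrite -bin_ffact natrM mulrC mulfK // fact_neq0.
Qed.

Lemma size_Bp j : size (Bp j) = j.+1.
Proof.
rewrite /Bp size_scale ?invr_eq0 ?fact_neq0 //.
have := size_prod_XsubC (index_enum 'I_j) (fun i : 'I_j => (i%:R - 2 : rat)).
have Hs : size (index_enum 'I_j) = j.
  by rewrite -(filter_predT (index_enum _)) deprecated_filter_index_enum -cardE card_ord.
by rewrite Hs.
Qed.

Lemma coef_pow0 (p q : {poly rat}) j k : p`_0 = 0 -> (k < j)%N -> (p ^+ j * q)`_k = 0.
Proof.
move=> p0; elim: j k => [|j IH] k Hk //.
rewrite exprS -mulrA coefM big1 // => i _.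
have Hi := ltn_ord i.
case: (nat_of_ord i) Hi => [|i'] Hi'; first by rewrite p0 mul0r.
by rewrite IH ?mulr0 //; lia.
Qed.

Lemma coef_pow_lead (p q : {poly rat}) j : p`_0 = 0 -> (p ^+ j * q)`_j = p`_1 ^+ j * q`_0.
Proof.
move=> p0; elim: j => [|j IH]; first by rewrite !expr0 !mul1r.
rewrite exprS -mulrA coefM big_ord_recl big_ord_recl /= p0 mul0r add0r.
rewrite big1 ?addr0; last first.
  by move=> i _; have := ltn_ord i => ?; rewrite coef_pow0 ?mulr0 // /bump /=; lia.
by rewrite /bump /= subSS subn0 IH exprS mulrA.
Qed.

Lemma sum_ext (F : nat -> rat) a b : (forall j, (a <= j)%N -> F j = 0) -> (a <= b)%N ->
  \sum_(j < b) F j = \sum_(j < a) F j.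
Proof.
move=> HF Hab; rewrite -!(big_mkord xpredT) (@big_cat_nat _ _ _ a 0 b) //=.
by rewrite [X in _ + X]big1_seq ?addr0 // => j /andP[_]; rewrite mem_iota => /andP[H _]; apply: HF.
Qed.

Lemma coef_expand K d k : (k < K)%N ->
  ((G K) ^+ d.+2 * Ex K (-1))`_k =
  \sum_(j < k.+1) 'C(d.+2, j)%:R * (((G K) - 1) ^+ j * Ex K (-1))`_k.
Proof.
move=> Hk.
have G0 : ((G K) - 1)`_0 = 0.
  rewrite coefB coef1 /G coef_tp ifT; last by lia.
  by rewrite /fps_expm1_div_z /= invr1 subrr.
have -> : G K = (G K - 1) + 1 by rewrite subrK.
rewrite exprD1n mulr_suml coef_sum addrK.
rewrite -(sum_ext (fun j => 'C(d.+2, j)%:R * ((G K - 1) ^+ j * Ex K (-1))`_k) k.+1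
           (d.+3 + k.+1)%N); last by lia.
  2: by move=> j Hj; rewrite coef_pow0 ?mulr0 //.
rewrite (sum_ext (fun j => 'C(d.+2, j)%:R * ((G K - 1) ^+ j * Ex K (-1))`_k) d.+3
           (d.+3 + k.+1)%N); last by lia.
  by apply: eq_bigr => j _; rewrite mulrnAl coefMn mulr_natl.
by move=> j Hj; rewrite bin_small ?mul0r //.
Qed.

Definition cc k j := (((G k.+1) - 1) ^+ j * Ex k.+1 (-1))`_k.
Definition Edef k : {poly rat} := k`!%:R *: \sum_(j < k.+1) cc k j *: Bp j.

Lemma eqK_tp K K' a : (K' <= K)%N -> eqK K' (tp K a) (tp K' a).
Proof. by move=> HK i Hi; rewrite !coef_tp Hi ifT //; lia. Qed.

Lemma eqK_subr K p p' q : eqK K p p' -> eqK K (p - q) (p' - q).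
Proof. by move=> H i Hi; rewrite !coefB H. Qed.

Lemma cc_K K k j : (k < K)%N -> (((G K) - 1) ^+ j * Ex K (-1))`_k = cc k j.
Proof.
move=> Hk; rewrite /cc; apply: (eqK_mul (K := k.+1)) => //.
  by apply: eqK_exp; apply: eqK_subr; apply: eqK_tp.
by apply: eqK_tp.
Qed.

Lemma Ecoef K k d : (k < K)%N ->
  (Edef k).[d%:R] = k`!%:R * ((G K) ^+ d.+2 * Ex K (-1))`_k.
Proof.
move=> Hk; rewrite /Edef hornerZ horner_sum coef_expand //; congr (_ * _).
by apply: eq_bigr => j _; rewrite hornerZ Bp_eval cc_K // mulrC.
Qed.

Lemma size_sum_le k (F : 'I_k -> {poly rat}) :
  (forall j, (size (F j) <= k)%N) -> (size (\sum_(j < k) F j)%R <= k)%N.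
Proof.
move=> HF; apply: (big_ind (fun p : {poly rat} => size p <= k)%N) => //.
  by rewrite size_poly0.
by move=> p q Hp Hq; apply: leq_trans (size_polyD _ _) _; rewrite geq_max Hp Hq.
Qed.

Lemma cc_neq0 k : cc k k != 0.
Proof.
rewrite /cc coef_pow_lead; last first.
  by rewrite coefB coef1 /G coef_tp /= /fps_expm1_div_z /= invr1 subrr.
rewrite /Ex coef_tp /= /ex expr0 fact0 divr1.
case: k => [|k]; first by rewrite expr0 oner_neq0.
by rewrite expf_neq0 // coefB coef1 /G coef_tp.
Qed.

Lemma size_E k : size (Edef k) = k.+1.
Proof.
have ck := cc_neq0 k.
rewrite /Edef size_scale ?fact_neq0 // big_ord_recr /= addrC size_polyDl.
  by rewrite size_scale ?size_Bp.
rewrite size_scale // size_Bp ltnS; apply: size_sum_le => j.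
apply: leq_trans (size_scale_leq _ _) _; rewrite size_Bp; apply: ltn_ord.
Qed.

Definition Hh K := G K * Ex K (- (2%:R)^-1).

Lemma Eprime_eval K k d : (k < K)%N ->
  (Eprime Edef k).[d%:R] = k`!%:R * ((Hh K) ^+ d.+2)`_k.
Proof.
move=> Hk; rewrite /Eprime horner_sum.
set c : rat := - (2%:R)^-1 * d%:R.
have -> : \sum_(i < k.+1) ('C(k, i)%:R *: (Edef i * (- (2%:R)^-1 *: 'X) ^+ (k - i))).[d%:R]
   = \sum_(i < k.+1) 'C(k, i)%:R * (i`!%:R * ((G K) ^+ d.+2 * Ex K (-1))`_i) * c ^+ (k - i).
  apply: eq_bigr => i _; have Hi := ltn_ord i.
  rewrite hornerZ hornerM (Ecoef K) ?horner_exp ?hornerZ ?hornerX; last by lia.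
  by rewrite /c; ring.
rewrite -(coef_mulEx K) //.
congr (_ * _).
have E : eqK K ((G K) ^+ d.+2 * Ex K (-1) * Ex K c) ((Hh K) ^+ d.+2).
  rewrite /Hh exprMn -mulrA.
  apply: eqK_mul => //.
  apply: eqK_trans (eqK_Ex _ _ _) _.
  apply: eqK_sym; apply: eqK_trans (eqK_Exn _ _ _) _.
  have -> : d.+2%:R * - (2%:R)^-1 = -1 + c :> rat.
    rewrite /c -[d.+2]addn2 natrD.
    have h2 : (2%:R : rat) != 0 by [].
    transitivity (- (d%:R * 2%:R^-1) - 2%:R * 2%:R^-1 :> rat); first ring.
    by rewrite mulfV //; ring.
  by [].
exact: E.
Qed.

Lemma Eprime_conv a b k :
  (Eprime Edef k).[(a + b + 2)%:R]
  = \sum_(i < k.+1) ('C(k, i))%:R * (Eprime Edef i).[a%:R] * (Eprime Edef (k - i)).[b%:R].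
Proof.
rewrite (Eprime_eval k.+1) //.
have -> : ((a + b + 2).+2 = a.+2 + b.+2)%N by lia.
rewrite exprD coefM mulr_sumr; apply: eq_bigr => i _; have Hi := ltn_ord i.
rewrite (Eprime_eval k.+1) // (Eprime_eval k.+1); last by lia.
rewrite binr; last by lia.
have h1 := fact_neq0 i; have h2 := fact_neq0 (k - i); have h3 := fact_neq0 k.
rewrite invfM.
set x := i`!%:R in h1 *; set y := (k - i)`!%:R in h2 *; set z := k`!%:R in h3 *.
transitivity (z * ((Hh k.+1 ^+ a.+2)`_i * (Hh k.+1 ^+ b.+2)`_(k - i)) * (x * x^-1) * (y * y^-1)).
  by rewrite !mulfV // !mulr1.
ring.
Qed.

Lemma rec_ext x y m k : (forall i, (i <= k.+1)%N -> x i = y i) -> rec x m k = rec y m k.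
Proof.
move=> H; rewrite /rec !H //; congr (_ + _ + _).
apply: eq_bigr => i _; have Hi := ltn_ord i; rewrite !H //; lia.
Qed.

Lemma rec_red x m k :
  rec x m k = m.+1%:R * x k + \sum_(i < k) 'C(k, i)%:R * (m%:R * x i - x i.+1).
Proof. by rewrite /rec big_ord_recr /= binn -natr1; ring. Qed.

Lemma rec_agree x y m k : (forall j, (j <= m)%N -> x j = y j) -> (k <= m.+1)%N ->
  rec x m k = rec y m k.
Proof.
move=> H Hk; case: (leqP k m) => Hkm.
  rewrite !rec_red H //; congr (_ + _).
  by apply: eq_bigr => i _; have Hi := ltn_ord i; rewrite !H //; lia.
have -> : k = m.+1 by lia.
rewrite !rec_red !big_ord_recr /= binSn.
have -> : \sum_(i < m) 'C(m.+1, i)%:R * (m%:R * x i - x i.+1)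
        = \sum_(i < m) 'C(m.+1, i)%:R * (m%:R * y i - y i.+1).
  by apply: eq_bigr => i _; have Hi := ltn_ord i; rewrite !H //; lia.
rewrite (H m) //; ring.
Qed.

Lemma cont_rec' d k :
  (d.+2)%:R * (Edef k).[d.+1%:R] = rec (fun i => (Edef i).[d%:R]) d.+1 k.
Proof.
rewrite (Ecoef k.+3); last by lia.
transitivity (rec (fun i => i`!%:R * ((G k.+3) ^+ d.+2 * Ex k.+3 (-1))`_i) d.+1 k).
  exact: (cont_rec k.+3 d k (ltnSn _)).
apply: rec_ext => i Hi; rewrite (Ecoef k.+3); [reflexivity | lia].
Qed.

Lemma moment0 k : moment 0 k = (0 ^ k)%N%:R.
Proof.
rewrite /moment (eq_bigr (fun _ => (0 ^ k)%N%:R)); last first.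
  by move=> s _; rewrite des_cdes /cdes big_ord0.
by rewrite sumr_const card_Sn /= divr1.
Qed.

Lemma E00 : (Edef 0).[0%:R] = 1.
Proof.
rewrite (Ecoef 2) // expr2 !coef0M /G /Ex !coef_tp /=.
by [].
Qed.

Lemma E10 : (Edef 1).[0%:R] = 0.
Proof.
rewrite (Ecoef 2) // expr2 coefM big_ord_recr big_ord_recl big_ord0 /=.
rewrite coef0M coefM big_ord_recr big_ord_recl big_ord0 /G /Ex !coef_tp /=.
by [].
Qed.

Lemma moments d k : (k <= d.+1)%N -> moment d k = (Edef k).[d%:R].
Proof.
elim: d k => [|d IH] k Hk.
  rewrite moment0; case: k Hk => [|[|k]] Hk //; first by rewrite E00.
  by rewrite E10.
have h : (d.+2)%:R != 0 :> rat by rewrite pnatr_eq0.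
apply: (mulfI h); rewrite moment_rec cont_rec'.
by apply: rec_agree => // j Hj; apply: IH.
Qed.

Lemma part3 k d : (Edef k).[d%:R] / (k`!)%:R
        = fps_mul (fps_exp fps_expm1_div_z (d + 2)) fps_exp_neg k.
Proof.
rewrite (Ecoef k.+1) // mulrC mulKf ?fact_neq0 //.
rewrite (fps_mul_tp k.+1) // addn2.
apply: (eqK_mul (K := k.+1)) => // i Hi.
by rewrite coef_tp Hi -fps_exp_tp.
Qed.

Theorem theorem3p10 :
  exists E : nat -> {poly rat},
    (forall k : nat, size (E k) = k.+1) /\
    (forall k d : nat, (k <= d.+1)%N -> moment d k = (E k).[d%:R]) /\
    (forall k d : nat,
        (E k).[d%:R] / (k`!)%:R
        = fps_mul (fps_exp fps_expm1_div_z (d + 2)) fps_exp_neg k) /\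
    (forall a b k : nat,
        (Eprime E k).[(a + b + 2)%:R]
        = \sum_(i < k.+1) ('C(k, i))%:R * (Eprime E i).[a%:R]
                                       * (Eprime E (k - i)).[b%:R]).
Proof.
exists Edef; split; first exact: size_E.
split; first by move=> k d; apply: moments.
split; first exact: part3.
exact: Eprime_conv.
Qed.
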